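(* Fix any $\alpha>1$. Consider Algorithm MWHVC (described in the context) run on a hypergraph $G=(V,E)$ of rank $f$ and maximum degree $\Delta$ with nonnegative vertex weights $w$, with parameters $\varepsilon\in(0,1]$, $\beta=\varepsilon/(f+\varepsilon)$ and multiplier $\alpha$. The number of iterations of the algorithm is $O\left(\log_\alpha\Delta + f\cdot\frac{\alpha}{\beta}\right)$.
   Context: Let $G=(V,E)$ be a hypergraph: each hyperedge is a nonempty subset of $V$ of size at most $f$ (rank $f$). Vertices have nonnegative weights $w(v)$. For $v\in V$, $E(v)=\{e\in E: v\in e\}$; $\Delta=\max_v |E(v)|\ge 3$. A hyperedge $e$ is covered by $C\subseteq V$ if $e\cap C\neq\emptyset$. The computation is distributed in synchronous rounds on the bipartite network with node set $V\cup E$ and a link between $v$ and $e$ iff $v\in e$. Parameters: $\varepsilon\in(0,1]$, $\beta=\varepsilon/(f+\varepsilon)$, and a multiplier $\alpha>1$. Algorithm MWHVC: Initialize $C\gets\emptyset$ and $E'(v)\gets E(v)$ for every $v$. Iteration $0$: every hyperedge $e$ sets $\mathrm{deal}_0(e)=\beta\cdot\min_{v\in e} w(v)/|E(v)|$ and $\delta_0(e)=\mathrm{deal}_0(e)$. For $i=1,2,\dots$: (a) every vertex $v\notin C$ (not terminated) checks whether $\sum_{e\in E(v)}\delta_{i-1}(e)\ge(1-\beta)w(v)$; if so, $v$ joins $C$, tells every $e\in E'(v)$ that $e$ is covered, and terminates. (b) Every uncovered hyperedge that receives such a message becomes covered, informs all its vertices, and terminates. (c) Every vertex $v\notin C$ that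 is told $e$ is covered sets $E'(v)\gets E'(v)\setminus\{e\}$; if $E'(v)=\emptyset$, $v$ terminates without joining $C$. (d) Every vertex $v\notin C$ sends ''raise'' to all $e\in E'(v)$ if $\sum_{e\in E'(v)}\mathrm{deal}_{i-1}(e)\le(\beta/\alpha)w(v)$, and otherwise sends ''stuck'' to all $e\in E'(v)$. (e) Every uncovered hyperedge $e$ sets $\mathrm{deal}_i(e)=\mathrm{deal}_{i-1}(e)$ if it received some ''stuck'' message, and $\mathrm{deal}_i(e)=\alpha\cdot\mathrm{deal}_{i-1}(e)$ otherwise, and $\delta_i(e)=\delta_{i-1}(e)+\mathrm{deal}_i(e)$. A vertex terminates when it is in $C$ or all its hyperedges are covered; a hyperedge terminates when covered. The number of iterations is the number of iterations until all nodes have terminated. *)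

(* Defs.v *)
From mathcomp Require Import all_boot all_order all_algebra.
From mathcomp Require Import reals exp.
Set Implicit Arguments. Unset Strict Implicit. Unset Printing Implicit Defensive.
Import Order.TTheory GRing.Theory Num.Theory.
Local Open Scope ring_scope.

(* A hypergraph is given by finite types [V] (vertices) and [E] (hyperedge
   names) and an incidence map [inc : E -> {set V}]; [inc e] is the vertex set
   of hyperedge [e]. *)

Definition Eof (V E : finType) (inc : E -> {set V}) (v : V) : {set E} :=
  [set e | v \in inc e].

Definition maxdeg (V E : finType) (inc : E -> {set V}) : nat :=
  \max_(v : V) #|Eof inc v|.

Definition betaP (R : realFieldType) (f : nat) (eps : R) : R := eps / (f%:R + eps).

(* minimum of a finite sequence [x :: s] of reals; used only on nonempty
   sequences *)
Definition seqmin (R : realDomainType) (s : seq R) : R :=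
  foldr Num.min (head 0 s) s.

Record mwhvc_state (R : realFieldType) (V E : finType) := MkState {
  stC     : {set V};
  stCov   : {set E};          (* covered (hence terminated) hyperedges *)
  stEp    : V -> {set E};
  stTerm  : {set V};          (* vertices terminated WITHOUT joining C *)
  stDeal  : E -> R;
  stDelta : E -> R
}.

Section MWHVC.
Context (R : realFieldType) (V E : finType) (inc : E -> {set V})
        (w : V -> R) (f : nat) (eps alpha : R).

Let beta := betaP f eps.

Definition deal0 (e : E) : R :=
  beta * seqmin [seq w v / (#|Eof inc v|%:R) | v in inc e].

Definition mwhvc_init : mwhvc_state R V E :=
  {| stC := set0;
     stCov := set0;
     stEp := Eof inc;
     (* a vertex with no hyperedge has all its hyperedges covered *)
     stTerm := [set v | Eof inc v == set0];
     stDeal := deal0;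
     stDelta := deal0 |}.

Definition mwhvc_step (s : mwhvc_state R V E) : mwhvc_state R V E :=
  let active := fun v => (v \notin stC s) && (v \notin stTerm s) in
  let J := [set v | active v &&
              ((1 - beta) * w v <= \sum_(e in Eof inc v) stDelta s e)] in
  let N := [set e | (e \notin stCov s) && [exists v in J, e \in stEp s v]] in
  let Cov' := stCov s :|: N in
  let Ep' := fun v => if active v && (v \notin J) then stEp s v :\: N
                      else stEp s v in
  let Term' := stTerm s :|:
      [set v | active v && (v \notin J) && (Ep' v == set0)] in
  let C' := stC s :|: J in
  let active' := fun v => (v \notin C') && (v \notin Term') in
  let stuck := fun v => active' v &&
      ~~ (\sum_(e in Ep' v) stDeal s e <= (beta / alpha) * w v) in
  let deal' := fun e =>
      if e \in Cov' then stDeal s e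
      else if [exists v, stuck v && (e \in Ep' v)] then stDeal s e
      else alpha * stDeal s e in
  let delta' := fun e =>
      if e \in Cov' then stDelta s e else stDelta s e + deal' e in
  {| stC := C'; stCov := Cov'; stEp := Ep'; stTerm := Term';
     stDeal := deal'; stDelta := delta' |}.

(* State at the end of iteration i. *)
Definition mwhvc_run (i : nat) : mwhvc_state R V E := iter i mwhvc_step mwhvc_init.

Definition mwhvc_all_terminated (i : nat) : Prop :=
  (forall e : E, e \in stCov (mwhvc_run i)) /\
  (forall v : V, (v \in stC (mwhvc_run i)) \/
                 (forall e, e \in Eof inc v -> e \in stCov (mwhvc_run i))).

End MWHVC.

(* Main.v *)
Require Import Defs.
From mathcomp Require Import all_boot all_order all_algebra.
From mathcomp Require Import reals exp.
From mathcomp Require Import ring lra.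
Import Order.TTheory GRing.Theory Num.Theory.
Local Open Scope ring_scope.

Section Alg.
Variables (R : realType) (V E : finType) (inc : E -> {set V}) (w : V -> R)
  (f : nat) (eps alpha : R).
Hypothesis hw : forall v, 0 <= w v.
Hypothesis heps : 0 < eps.
Hypothesis heps1 : eps <= 1.
Hypothesis halpha : 1 < alpha.
Hypothesis hne : forall e, inc e != set0.

Let bt := betaP f eps.
Let step := mwhvc_step inc w f eps alpha.
Let run := mwhvc_run inc w f eps alpha.

Definition act (s : mwhvc_state R V E) v := (v \notin stC s) && (v \notin stTerm s).
Definition Jset s := [set v | act s v &&
   ((1 - bt) * w v <= \sum_(e in Eof inc v) stDelta s e)].
Definition Nset s := [set e | (e \notin stCov s) && [exists v in Jset s, e \in stEp s v]].
Definition stuck s v := act (step s) v &&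
   ~~ (\sum_(e in stEp (step s) v) stDeal s e <= (bt / alpha) * w v).

Lemma stepC s : stC (step s) = stC s :|: Jset s. Proof. by []. Qed.
Lemma stepCov s : stCov (step s) = stCov s :|: Nset s. Proof. by []. Qed.
Lemma stepEp s v : stEp (step s) v =
  if act s v && (v \notin Jset s) then stEp s v :\: Nset s else stEp s v.
Proof. by []. Qed.
Lemma stepTerm s : stTerm (step s) = stTerm s :|:
   [set v | act s v && (v \notin Jset s) && (stEp (step s) v == set0)].
Proof. by []. Qed.
Lemma stepDeal s e : stDeal (step s) e =
  if e \in stCov (step s) then stDeal s e
  else if [exists v, stuck s v && (e \in stEp (step s) v)] then stDeal s e
  else alpha * stDeal s e.
Proof. by []. Qed.
Lemma stepDelta s e : stDelta (step s) e =
  if e \in stCov (step s) then stDelta s e else stDelta s e + stDeal (step s) e.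
Proof. by []. Qed.


Lemma bt_gt0 : 0 < bt.
Proof. rewrite /bt /betaP; apply: divr_gt0 => //; apply: ltr_wpDl => //. Qed.
Lemma bt_le1 : bt <= 1.
Proof.
rewrite /bt /betaP ler_pdivrMr ?mul1r; last by apply: ltr_wpDl.
by rewrite lerDr.
Qed.

Lemma foldr_min_mem (x0 : R) s : foldr Num.min x0 s \in x0 :: s.
Proof.
elim: s => [|a s IH] /=; first by rewrite inE.
have : Num.min a (foldr Num.min x0 s) \in [:: a; foldr Num.min x0 s].
  by rewrite /Num.min /Order.min; case: ifP; rewrite !inE eqxx ?orbT.
rewrite !inE => /orP [/eqP->|/eqP->]; first by rewrite eqxx orbT.
by move: IH; rewrite !inE => /orP [->|->]; rewrite ?orbT.
Qed.

Lemma seqmin_mem (s : seq R) : s != [::] -> seqmin s \in s.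
Proof.
case: s => [//|a s] _; rewrite /seqmin.
have := foldr_min_mem a (a :: s); rewrite inE => /orP [/eqP->|//].
by rewrite inE eqxx.
Qed.

Lemma deal0_ex e : exists2 u, u \in inc e &
  deal0 inc w f eps e = bt * (w u / (#|Eof inc u|%:R)).
Proof.
rewrite /deal0.
set s := [seq _ | v in inc e].
have : s != [::].
  have [u hu] := set0Pn _ (hne e).
  apply/eqP => hs.
  have : w u / (#|Eof inc u|%:R) \in s by apply/imageP; exists u.
  by rewrite hs.
move/seqmin_mem => /imageP [u hu ->]; by exists u.
Qed.

Lemma deal0_ge0 e : 0 <= deal0 inc w f eps e.
Proof.
have [u _ ->] := deal0_ex e.
apply: mulr_ge0; first exact: ltW bt_gt0.
by apply: divr_ge0.
Qed.

Definition Inv (s : mwhvc_state R V E) :=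
 [/\ (forall e, 0 <= stDeal s e), (forall e, 0 <= stDelta s e),
     (forall v, act s v -> stEp s v = Eof inc v :\: stCov s) &
     (forall e, e \notin stCov s -> forall u, u \in inc e -> act s u)].

Lemma Inv_init : Inv (mwhvc_init inc w f eps).
Proof.
split => //=.
- exact: deal0_ge0.
- exact: deal0_ge0.
- by move=> v _; rewrite setD0.
- move=> e _ u hu; rewrite /act /= in_set0 in_set /=.
  apply/set0Pn; exists e; by rewrite /Eof in_set.
Qed.


Lemma alpha_gt0 : 0 < alpha.
Proof. exact: lt_trans ltr01 halpha. Qed.

Lemma Inv_step s : Inv s -> Inv (step s).
Proof.
case=> h1 h2 h3 h4.
have hd : forall e, 0 <= stDeal (step s) e.
  move=> e; rewrite stepDeal; case: ifP => _; first exact: h1.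
  case: ifP => _; first exact: h1.
  by apply: mulr_ge0; [exact: ltW alpha_gt0|exact: h1].
split => //.
- move=> e; rewrite stepDelta; case: ifP => _; first exact: h2.
  by apply: addr_ge0.
- move=> v; rewrite /act stepC stepTerm !in_setU !negb_or.
  move=> /andP [/andP [hC hJ] /andP [hT hT']].
  have hact : act s v by rewrite /act hC hT.
  rewrite stepEp hact hJ /= (h3 _ hact) setDDl.
  by [].
- move=> e; rewrite stepCov in_setU negb_or => /andP [he hN] u hu.
  have hact := h4 e he u hu.
  have heu : e \in stEp s u by rewrite (h3 _ hact) in_setD he /Eof in_set hu.
  have hJ : u \notin Jset s.
    apply/negP => hJ; move/negP: hN; apply; rewrite in_set he /=.
    by apply/existsP; exists u; rewrite hJ heu.
  have hact' := hact.
  rewrite /act stepC stepTerm !in_setU !negb_or.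
  move/andP: hact' => [-> ->]; rewrite hJ in_set stepEp hact hJ.
  rewrite !andbT !andTb /=.
  apply/negP => /eqP h0.
  have : e \in stEp s u :\: Nset s by rewrite in_setD heu hN.
  by rewrite h0 in_set0.
Qed.

Lemma Inv_run i : Inv (run i).
Proof.
elim: i => [|i IH]; first exact: Inv_init.
exact: Inv_step.
Qed.

Lemma run_S i : run i.+1 = step (run i).
Proof. by []. Qed.

Lemma cov_mono i j : (i <= j)%N -> stCov (run i) \subset stCov (run j).
Proof.
move/subnK => <-; elim: (j - i)%N => [|k IH] //.
rewrite addSn run_S stepCov; apply: subset_trans IH _; exact: subsetUl.
Qed.


Lemma delta_mono s e : Inv s -> stDelta s e <= stDelta (step s) e.
Proof.
move=> hI; have [d1 _ _ _] := Inv_step s hI.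
rewrite stepDelta; case: ifP => _ //; by rewrite lerDl.
Qed.

Lemma stuck_act s u : stuck s u -> act s u && (u \notin Jset s).
Proof.
rewrite /stuck /act stepC stepTerm !in_setU !negb_or.
by move=> /andP [/andP [/andP [-> ->] /andP [-> _]] _].
Qed.

Lemma stuck_lt s u : stuck s u ->
  \sum_(e in Eof inc u) stDelta s e < (1 - bt) * w u.
Proof.
move/stuck_act => /andP [hact]; rewrite in_set hact /=.
by rewrite -ltNge.
Qed.

Lemma stuck_inc s u : Inv s -> stuck s u ->
  \sum_(e in Eof inc u) stDelta s e + (bt / alpha) * w u <
  \sum_(e in Eof inc u) stDelta (step s) e.
Proof.
move=> hI hst; have [d1 _ d3 _] := Inv_step s hI.
have hst' := hst; move/andP: hst => [hact hlt]; rewrite -ltNge in hlt.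
have hEp := d3 _ hact.
set A := stEp (step s) u in hlt hEp *.
have key : forall e, e \in Eof inc u ->
    stDelta s e + (if e \in A then stDeal s e else 0) <= stDelta (step s) e.
  move=> e _; case: ifP => heA.
  - have heC : e \notin stCov (step s) by move: heA; rewrite hEp in_setD => /andP[].
    rewrite stepDelta (negbTE heC) stepDeal (negbTE heC).
    have -> : [exists v, stuck s v && (e \in stEp (step s) v)].
      by apply/existsP; exists u; rewrite hst' heA.
    by [].
  - rewrite addr0; exact: delta_mono.
have E1 : \sum_(e in Eof inc u) (if e \in A then stDeal s e else 0) =
          \sum_(e in A) stDeal s e.
  rewrite -big_mkcondr; apply: eq_bigl => e.
  case: (boolP (e \in A)) => heA; last by rewrite andbF.
  by move: (heA); rewrite hEp in_setD andbT => /andP [_ ->].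
apply: (lt_le_trans _ (ler_sum _ key)).
by rewrite big_split /= E1 ltrD2l.
Qed.


Definition stk i u : bool := stuck (run i) u.
Definition cnt n u : nat := (\sum_(i < n) stk i u)%N.

Lemma cnt_S n u : cnt n.+1 u = (cnt n u + stk n u)%N.
Proof. by rewrite /cnt big_ord_recr. Qed.

Lemma cnt_delta n u :
  (cnt n u)%:R * (bt / alpha * w u) <= \sum_(e in Eof inc u) stDelta (run n) e.
Proof.
elim: n => [|n IH].
  rewrite /cnt big_ord0 mul0r; apply: sumr_ge0 => e _.
  by have [_ h _ _] := Inv_run 0; apply: h.
rewrite cnt_S natrD mulrDl run_S.
case: (boolP (stk n u)) => h.
  have := stuck_inc (run n) u (Inv_run n) h; rewrite mul1r; lra.
rewrite mul0r addr0; apply: le_trans IH _.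
by apply: ler_sum => e _; apply: delta_mono; apply: Inv_run.
Qed.

Lemma cnt_bound n u : (cnt n u)%:R <= alpha / bt + 1.
Proof.
have hb := bt_gt0; have ha := alpha_gt0.
elim: n => [|n IH].
  rewrite /cnt big_ord0; apply: addr_ge0 => //; exact: ltW (divr_gt0 _ _).
rewrite cnt_S natrD.
case: (boolP (stk n u)) => h; last by rewrite addr0.
have h1 := stuck_lt (run n) u h; have h2 := cnt_delta n u.
have hwp : 0 < w u.
  rewrite lt_def hw andbT; apply/negP => /eqP hw0.
  move: h1 h2; rewrite hw0 !mulr0 => h1 h2; lra.
have h3 : (cnt n u)%:R * (bt / alpha) * w u < 1 * w u.
  rewrite -mulrA; apply: le_lt_trans h2 _; apply: lt_le_trans h1 _.
  rewrite ler_pM2r //; have := bt_gt0; lra.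
rewrite ltr_pM2r // in h3.
have h4 : (cnt n u)%:R < alpha / bt.
  rewrite ltr_pdivlMr //; move: h3; rewrite mulrA ltr_pdivrMr // mul1r.
  by [].
rewrite lerD2r; exact: ltW.
Qed.

Definition rs i e : bool := (e \notin stCov (step (run i))) &&
  ~~ [exists v, stuck (run i) v && (e \in stEp (step (run i)) v)].
Definition rcnt n e : nat := (\sum_(i < n) rs i e)%N.

Lemma rcnt_S n e : rcnt n.+1 e = (rcnt n e + rs n e)%N.
Proof. by rewrite /rcnt big_ord_recr. Qed.

Lemma deal_pow n e : e \notin stCov (run n) ->
  stDeal (run n) e = alpha ^+ rcnt n e * deal0 inc w f eps e.
Proof.
elim: n => [|n IH] he.
  by rewrite /rcnt big_ord0 expr0 mul1r.
have he' : e \notin stCov (run n).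
  apply: contra he => h; apply: (subsetP (cov_mono n n.+1 (leqnSn n))) h.
rewrite run_S in he *.
rewrite stepDeal (negbTE he) rcnt_S /rs he /=.
case: ifP => hex /=.
  by rewrite addn0 IH.
by rewrite addn1 exprS IH // mulrA.
Qed.


Lemma raise_bound n e : rs n e -> alpha ^+ (rcnt n e).+1 <= (maxdeg inc)%:R.
Proof.
move=> /andP [he hnex].
have he' : e \notin stCov (run n).
  apply: contra he => h; exact: (subsetP (cov_mono n n.+1 (leqnSn n))) h.
have [u0 hu0 hd0] := deal0_ex e.
have [i1 i2 i3 i4] := Inv_run n.
have [j1 j2 j3 j4] := Inv_step (run n) (Inv_run n).
have hact' := j4 e he u0 hu0.
have heE : e \in Eof inc u0 by rewrite /Eof in_set.
have heA : e \in stEp (step (run n)) u0 by rewrite j3 // in_setD he heE.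
have hns : ~~ stuck (run n) u0.
  apply/negP => hs; move/negP: hnex; apply; apply/existsP; exists u0.
  by rewrite hs heA.
move: hns; rewrite /stuck hact' /= negbK => hsum.
have hle : stDeal (run n) e <= bt / alpha * w u0.
  apply: le_trans hsum; rewrite (bigD1 e heA) /= lerDl.
  by apply: sumr_ge0 => i _; apply: i1.
have hw0 : 0 < w u0.
  rewrite lt_def hw andbT; apply/negP => /eqP hw0.
  have hact := i4 e he' u0 hu0.
  have hJ : u0 \in Jset (run n).
    rewrite in_set hact hw0 mulr0 /=; apply: sumr_ge0 => i _; apply: i2.
  have : e \in stCov (step (run n)).
    rewrite stepCov in_setU; apply/orP; right; rewrite in_set he' /=.
    apply/existsP; exists u0; rewrite hJ /= (i3 _ hact) in_setD he' heE.
    by [].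
  by rewrite (negbTE he).
rewrite deal_pow // hd0 in hle.
set d0 := (#|Eof inc u0|)%:R in hle.
have hd0p : 0 < d0 by rewrite /d0 ltr0n card_gt0; apply/set0Pn; exists e.
have hdD : d0 <= (maxdeg inc)%:R.
  by rewrite /d0 ler_nat /maxdeg; exact: (@leq_bigmax _ (fun v => #|Eof inc v|) u0).
apply: le_trans hdD.
have hb := bt_gt0; have ha := alpha_gt0.
set K := bt * w u0.
have hK : 0 < K by apply: mulr_gt0.
set r := alpha ^+ rcnt n e.
have hr : 0 <= r by apply: exprn_ge0; apply: ltW.
have H2 : r * (K / d0) * alpha <= K.
  have e1 : r * (K / d0) = r * (bt * (w u0 / d0)) by rewrite /K; ring.
  have e2 : K = (bt / alpha * w u0) * alpha.
    rewrite /K; field; by apply: lt0r_neq0.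
  rewrite e1 [X in _ <= X]e2.
  by apply: ler_wpM2r; [exact: ltW ha|].
have eq1 : r * alpha = (r * (K / d0) * alpha) * (d0 / K).
  field; apply/andP; split; by apply: lt0r_neq0.
rewrite exprSr -/r eq1.
have e3 : d0 = K * (d0 / K) by field; apply: lt0r_neq0.
rewrite [X in _ <= X]e3.
apply: ler_wpM2r => //; apply: ltW; by apply: divr_gt0.
Qed.

Lemma rcnt_bound n e : (1 <= maxdeg inc)%N ->
  (rcnt n e)%:R <= ln ((maxdeg inc)%:R) / ln alpha.
Proof.
move=> hD1.
have hla : 0 < ln alpha by apply: ln_gt0.
have hD : 0 < (maxdeg inc)%:R :> R by rewrite ltr0n.
have hlD : 0 <= ln ((maxdeg inc)%:R : R).
  rewrite -ln1 ler_ln ?posrE ?ltr01 // ler1n //.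
elim: n => [|n IH].
  rewrite /rcnt big_ord0 /=; apply: divr_ge0 => //; exact: ltW.
rewrite rcnt_S; case: (boolP (rs n e)) => h; last by rewrite addn0.
have hb := raise_bound n e h.
rewrite ler_pdivlMr // addn1.
have hpos : 0 < alpha ^+ (rcnt n e).+1 by apply: exprn_gt0; apply: alpha_gt0.
move: hb; rewrite -ler_ln ?posrE // lnXn; last exact: alpha_gt0.
by rewrite mulr_natl.
Qed.


Lemma all_cov T e : (1 <= maxdeg inc)%N -> (forall e, #|inc e| <= f)%N ->
  ln ((maxdeg inc)%:R) / ln alpha + f%:R * (alpha / bt + 1) < T%:R ->
  e \in stCov (run T).
Proof.
move=> hD hf hT; apply/negPn/negP => he.
have key : forall i : 'I_T, (1 <= rs i e + \sum_(u in inc e) stk i u)%N.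
  move=> i; have hi : (i.+1 <= T)%N := ltn_ord i.
  have he1 : e \notin stCov (step (run i)).
    apply: contra he => h; exact: (subsetP (cov_mono i.+1 T hi)) h.
  case: (boolP (rs i e)) => hr; first by rewrite /= add1n.
  move: hr; rewrite /rs he1 andTb negbK => /existsP [v /andP [hv hev]].
  have [_ _ j3 _] := Inv_step (run i) (Inv_run i).
  have hvin : v \in inc e.
    move/andP: (hv) => [hact _].
    by move: hev; rewrite j3 // in_setD /Eof in_set => /andP [_ ->].
  apply: leq_trans (leq_addl _ _).
  by rewrite (bigD1 v hvin) /= /stk hv.
have hsum : (T <= rcnt T e + \sum_(u in inc e) cnt T u)%N.
  apply: (@leq_trans (\sum_(i < T) 1)%N); first by rewrite sum1_card card_ord.
  rewrite /rcnt /cnt exchange_big -big_split /=.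
  by apply: leq_sum => i _; exact: key.
have hR : T%:R <= (rcnt T e)%:R + \sum_(u in inc e) (cnt T u)%:R :> R.
  by rewrite -natr_sum -natrD ler_nat.
have h2 : \sum_(u in inc e) (cnt T u)%:R <= \sum_(u in inc e) (alpha / bt + 1).
  by apply: ler_sum => u _; apply: cnt_bound.
rewrite sumr_const in h2.
have hpos : 0 <= alpha / bt + 1.
  apply: addr_ge0 => //; apply: ltW; apply: divr_gt0; [exact: alpha_gt0|exact: bt_gt0].
have h3 : (alpha / bt + 1) *+ #|inc e| <= f%:R * (alpha / bt + 1).
  by rewrite -mulr_natl ler_wpM2r // ler_nat.
have := rcnt_bound T e hD.
lra.
Qed.

End Alg.

Theorem mainTheorem6 (R : realType) :
  exists c : R, 0 < c /\
  forall (V E : finType) (inc : E -> {set V}) (w : V -> R) (f : nat)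
         (eps alpha : R),
    injective inc ->
    (forall e, inc e != set0) ->
    (forall e, #|inc e| <= f)%N ->
    (forall v, 0 <= w v) ->
    (3 <= maxdeg inc)%N ->
    0 < eps -> eps <= 1 ->
    1 < alpha ->
    exists i : nat,
      mwhvc_all_terminated inc w f eps alpha i /\
      i%:R <= c * (ln ((maxdeg inc)%:R) / ln alpha
                   + f%:R * alpha / betaP f eps).
Proof.
exists 4; split => //.
move=> V E inc w f eps alpha _ hne hf hw hD heps heps1 ha.
have hb : 0 < betaP f eps.
  rewrite /betaP; apply: divr_gt0 => //; apply: ltr_wpDl => //.
have hb1 : betaP f eps <= 1.
  rewrite /betaP ler_pdivrMr ?mul1r; last by apply: ltr_wpDl.
  by rewrite lerDr.
set bt := betaP f eps in hb hb1 *.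
have [e0 _] : exists e : E, true.
  case: (pickP (fun _ : E => true)) => [e _|h0]; first by exists e.
  exfalso; move: hD; rewrite /maxdeg big1 // => v _.
  apply/eqP; rewrite cards_eq0; apply/eqP/setP => e.
  by have := h0 e.
have hf1 : (1 <= f)%N by apply: leq_trans (hf e0); rewrite card_gt0.
have hD1 : (1 <= maxdeg inc)%N by apply: leq_trans hD.
have ha0 : 0 < alpha by apply: lt_trans ha.
have hla : 0 < ln alpha by apply: ln_gt0.
have hDp : 0 < (maxdeg inc)%:R :> R by rewrite ltr0n.
have hlD : 0 <= ln ((maxdeg inc)%:R : R).
  rewrite -ln1 ler_ln ?posrE ?ltr01 // ler1n //.
set L := ln ((maxdeg inc)%:R : R) / ln alpha.
have hL : 0 <= L by apply: divr_ge0 => //; apply: ltW.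
have hA : 1 <= alpha / bt.
  rewrite ler_pdivlMr // mul1r; apply: le_trans hb1 _; exact: ltW.
have hfR : 1 <= f%:R :> R by rewrite ler1n.
set G := f%:R * (alpha / bt).
have hG : f%:R <= G.
  by rewrite /G -{1}[f%:R]mulr1 ler_wpM2l // ler0n.
set X := L + f%:R * (alpha / bt + 1).
have hX0 : 0 <= X.
  apply: addr_ge0 => //; apply: mulr_ge0; first by rewrite ler0n.
  apply: addr_ge0; [apply: ltW; exact: lt_le_trans hA | by []].
have hXT : X < (Num.truncn X).+1%:R by apply: truncnS_gt.
have hcov : forall e, e \in stCov (mwhvc_run inc w f eps alpha (Num.truncn X).+1).
  move=> e; apply: all_cov => //.
exists (Num.truncn X).+1; split.
  split => [e|v]; [exact: hcov | by right => e _; exact: hcov].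
have ht : (Num.truncn X)%:R <= X by rewrite truncn_le.
rewrite -mulrA -/G -addn1 natrD.
have eX : X = L + G + f%:R by rewrite /X /G mulrDr mulr1 addrA.
lra.
Qed.
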